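(* Let $n\geq1$, $d\geq2$. For $y,v,w,z\in\mathbb Z_{\geq0}^n$ with entries of each summing to $d-1$ and $y+v=z+w$, the polynomial $$\sum_{s=1}^n\left(u_{y+e_s}u_{v+e_s}-u_{w+e_s}u_{z+e_s}\right)$$ vanishes on the odeco variety in $S^d(\mathbb C^n)$.
   Context: For $T\in S^d(\mathbb C^n)$ and $a=(a_1,\dots,a_n)\in\mathbb Z_{\geq0}^n$ with $a_1+\dots+a_n=d$, the coordinate $u_a$ is $u_a=d!\,T_{1\dots1\,2\dots2\,\dots\,n\dots n}$ where index $j$ is repeated $a_j$ times; $e_s$ is the $s$-th standard basis vector. A real tensor $T\in S^d(\mathbb R^n)$ is odeco if $T=\sum_{i=1}^n\lambda_iv_i^{\otimes d}$ with $v_1,\dots,v_n$ an orthonormal basis of $\mathbb R^n$ and $\lambda_i\in\mathbb R$; the odeco variety is the Zariski closure in $S^d(\mathbb C^n)$ of the set of odeco tensors. *)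

(* Defs.v *)
From HB Require Import structures.
From mathcomp Require Import all_boot all_order all_algebra.
From mathcomp Require Import fingroup perm.
From mathcomp Require Import reals.
From mathcomp Require Import complex.
From mathcomp Require Import mpoly.

Set Implicit Arguments.
Unset Strict Implicit.
Unset Printing Implicit Defensive.

Import Order.TTheory GRing.Theory Num.Theory.
Local Open Scope ring_scope.
Local Open Scope complex_scope.

(* Conventions.
   - R : realType is the field of real numbers; C := complex R (= complex R) the complex numbers.
   - A tensor in (C^n)^{\otimes d} is a function {ffun 'I_d -> 'I_n} -> C
     (T f = T_{f 0, ..., f (d-1)}).
   - S^d(C^n) = symmetric tensors (invariant under permuting the d slots).
   - Polynomial functions on the tensor space: multivariate polynomials in the
     #|{ffun 'I_d -> 'I_n}| entries of the tensor. *)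

Section Odeco.
Variables (R : realType) (n d : nat).

Definition tindex := {ffun 'I_d -> 'I_n}.
Definition tensor := {ffun tindex -> complex R}.

Definition is_symmetric (T : tensor) : Prop :=
  forall (s : 'S_d) (f : tindex), T [ffun k => f (s k)] = T f.

Definition nentries := #|{: tindex}|.

Definition peval (p : {mpoly complex R[nentries]}) (T : tensor) : complex R :=
  p.@[fun j : 'I_nentries => T (enum_val (j : 'I_#|{: tindex}|))].

(* real odeco tensors: T = \sum_i lambda_i v_i^{\otimes d}, where the
   v_i are the rows of a real orthogonal matrix V (V V^T = 1). *)
Definition odeco_tensor (lam : 'I_n -> R) (V : 'M[R]_n) : tensor :=
  [ffun f : tindex => ((\sum_(i < n) lam i * \prod_(k < d) V i (f k))%:C)%C].

Definition is_odeco (T : tensor) : Prop :=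
  exists (lam : 'I_n -> R) (V : 'M[R]_n),
    V *m V^T = 1%:M /\ T = odeco_tensor lam V.

Definition zariski_closure (S : tensor -> Prop) (T : tensor) : Prop :=
  is_symmetric T /\
  forall p : {mpoly complex R[nentries]},
    (forall X, S X -> peval p X = 0) -> peval p T = 0.

Definition odeco_variety (T : tensor) : Prop := zariski_closure is_odeco T.

(* The index (1,...,1,2,...,2,...,n,...,n) with j repeated a j times;
   i0 is a default value (irrelevant when \sum_j a j = d). *)
Definition mindex (i0 : 'I_n) (a : 'I_n -> nat) : tindex :=
  [ffun k : 'I_d => nth i0 (flatten [seq nseq (a j) j | j <- enum 'I_n]) k].

Definition ucoord (i0 : 'I_n) (a : 'I_n -> nat) (T : tensor) : complex R :=
  (d`!)%:R * T (mindex i0 a).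

Definition add_e (a : 'I_n -> nat) (s : 'I_n) : 'I_n -> nat :=
  fun j => (a j + (j == s))%N.

End Odeco.

(* Main.v *)
Require Import Defs.
From HB Require Import structures.
From mathcomp Require Import all_boot all_order all_algebra.
From mathcomp Require Import fingroup perm.
From mathcomp Require Import reals.
From mathcomp Require Import complex.
From mathcomp Require Import mpoly.
Import Order.TTheory GRing.Theory Num.Theory.
Local Open Scope ring_scope.

Lemma prod_mindex (K : comRingType) (n d : nat) (i0 : 'I_n) (a : 'I_n -> nat)
  (ha : (\sum_(j < n) a j)%N = d) (F : 'I_n -> K) :
  \prod_(k < d) F (mindex d i0 a k) = \prod_(j < n) F j ^+ a j.
Proof.
have hs : size (flatten [seq nseq (a j) j | j <- enum 'I_n]) = d.
  rewrite size_flatten /shape -map_comp sumnE big_map -ha.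
  by rewrite -big_enum /= ; apply: eq_bigr => j _; rewrite /= size_nseq.
under eq_bigr => k _ do rewrite /mindex ffunE.
rewrite -(big_mkord xpredT (fun k => F (nth i0 (flatten [seq nseq (a j) j | j <- enum 'I_n]) k))) -{1}hs -(big_nth i0 xpredT F).
rewrite big_flatten big_map -big_enum /=.
apply: eq_bigr => j _; rewrite big_nseq.
elim: (a j) => [|m IH] //=; by rewrite IH exprS.
Qed.

Lemma prod_add_e (K : comRingType) (n : nat) (F : 'I_n -> K) a s :
  \prod_(j < n) F j ^+ add_e a s j = F s * \prod_(j < n) F j ^+ a j.
Proof.
rewrite /add_e; under eq_bigr do rewrite exprD; rewrite big_split /= mulrC.
congr (_ * _); rewrite (bigD1 s) //= eqxx expr1 big1 ?mulr1 // => j /negbTE -> //.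
Qed.

Lemma sum_add_e (n : nat) (a : 'I_n -> nat) s :
  (\sum_(j < n) add_e a s j)%N = ((\sum_(j < n) a j) + 1)%N.
Proof.
rewrite /add_e big_split /=; congr (_ + _)%N.
rewrite (bigD1 s) //= eqxx big1 ?addn0 // => j /negbTE -> //.
Qed.

Lemma orth_sum (R : realType) (n : nat) (V : 'M[R]_n) (A B : 'I_n -> R) :
  V *m V^T = 1%:M ->
  \sum_(s < n) ((\sum_(i < n) A i * V i s) * (\sum_(k < n) B k * V k s))
  = \sum_(i < n) A i * B i.
Proof.
move=> hV.
have ho : forall i k, \sum_(s < n) V i s * V k s = (i == k)%:R.
  move=> i k; have := congr1 (fun M : 'M[R]_n => M i k) hV; rewrite !mxE => <-.
  by apply: eq_bigr => s _; rewrite mxE.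
transitivity (\sum_(i < n) \sum_(k < n) A i * B k * \sum_(s < n) V i s * V k s).
  rewrite (eq_bigr (fun s => \sum_(i < n) \sum_(k < n) A i * V i s * (B k * V k s))); last first.
    by move=> s _; rewrite mulr_suml; apply: eq_bigr => i _; rewrite mulr_sumr.
  rewrite exchange_big /=; apply: eq_bigr => i _.
  rewrite exchange_big /=; apply: eq_bigr => k _.
  rewrite mulr_sumr; apply: eq_bigr => s _.
  rewrite !mulrA; congr (_ * _); rewrite -!mulrA; congr (_ * _).
  exact: mulrC.
apply: eq_bigr => i _; rewrite (bigD1 i) //= ho eqxx mulr1 big1 ?addr0 // => k /negbTE hk.
by rewrite ho eq_sym hk mulr0.
Qed.

Lemma odeco_entry (R : realType) (n d : nat) (i0 : 'I_n) lam (V : 'M[R]_n) a s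
  (ha : (\sum_(j < n) a j)%N = (d - 1)%N) (hd : (1 <= d)%N) :
  odeco_tensor d lam V (mindex d i0 (add_e a s))
  = ((\sum_(i < n) (lam i * \prod_(j < n) V i j ^+ a j) * V i s)%:C)%C.
Proof.
rewrite ffunE; congr (_%:C)%C; apply: eq_bigr => i _.
rewrite (@prod_mindex _ _ d i0 (add_e a s)); last by rewrite sum_add_e ha subnK.
by rewrite prod_add_e -mulrA [V i s * _]mulrC.
Qed.

Theorem lemma3p5 (R : realType) (n d : nat) (hn : (0 < n)%N) (hd : (2 <= d)%N)
    (y v w z : 'I_n -> nat)
    (hy : (\sum_(i < n) y i)%N = (d - 1)%N)
    (hv : (\sum_(i < n) v i)%N = (d - 1)%N)
    (hw : (\sum_(i < n) w i)%N = (d - 1)%N)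
    (hz : (\sum_(i < n) z i)%N = (d - 1)%N)
    (hyv : forall i, (y i + v i)%N = (z i + w i)%N)
    (T : tensor R n d) :
  odeco_variety T ->
  \sum_(s < n)
     (ucoord (Ordinal hn) (add_e y s) T * ucoord (Ordinal hn) (add_e v s) T
      - ucoord (Ordinal hn) (add_e w s) T * ucoord (Ordinal hn) (add_e z s) T)
  = 0.
Proof.
move=> [_ HT].
set i0 := Ordinal hn.
pose idx (a : 'I_n -> nat) : 'I_(nentries n d) := enum_rank (mindex d i0 a).
pose p : {mpoly (complex R)[nentries n d]} := \sum_(s < n)
  ('X_(idx (add_e y s)) * 'X_(idx (add_e v s)) - 'X_(idx (add_e w s)) * 'X_(idx (add_e z s))).
have pE : forall X : tensor R n d, peval p X = \sum_(s < n)
   (X (mindex d i0 (add_e y s)) * X (mindex d i0 (add_e v s))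
    - X (mindex d i0 (add_e w s)) * X (mindex d i0 (add_e z s))).
  move=> X; rewrite /peval /p raddf_sum /=; apply: eq_bigr => s _.
  by rewrite mevalB !mevalM !mevalXU /idx !enum_rankK.
have hd1 : (1 <= d)%N by apply: leq_trans hd.
have H0 : peval p T = 0.
  apply: HT => X [lam [V [hV ->]]]; rewrite pE.
  under eq_bigr do rewrite !odeco_entry // -!rmorphM -rmorphB.
  rewrite -rmorph_sum /= [X in (X%:C)%C](_ : _ = 0) //.
  rewrite sumrB !orth_sum //; apply/eqP; rewrite subr_eq0; apply/eqP.
  apply: eq_bigr => i _.
  rewrite mulrACA [RHS]mulrACA; congr (_ * _).
  rewrite -!big_split /=; apply: eq_bigr => j _; by rewrite -!exprD hyv addnC.
rewrite pE in H0.
rewrite (_ : \sum_(s < n) _ = ((d`!)%:R * (d`!)%:R) * \sum_(s < n)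
   (T (mindex d i0 (add_e y s)) * T (mindex d i0 (add_e v s))
    - T (mindex d i0 (add_e w s)) * T (mindex d i0 (add_e z s)))).
  by rewrite H0 mulr0.
rewrite mulr_sumr; apply: eq_bigr => s _; rewrite /ucoord.
rewrite mulrBr; congr (_ - _); rewrite !mulrA; congr (_ * _); rewrite -!mulrA; congr (_ * _); exact: mulrC.
Qed.
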